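(* If $G$ is a geometric strongly regular graph, then $G$ is integrable.
   Context: A strongly regular graph with parameters $(v,k,\lambda,\mu)$ is a $k$-regular graph on $v$ vertices in which adjacent vertices have $\lambda$ common neighbours and distinct nonadjacent vertices have $\mu$ common neighbours. Let $\theta_{\min}(G)$ be the smallest eigenvalue of the adjacency matrix $A(G)$. Every clique of $G$ has at most $1-\frac{k}{\theta_{\min}(G)}$ vertices; a clique with exactly this many vertices is called a Delsarte clique. $G$ is geometric if there is a set $\mathcal{C}$ of Delsarte cliques of $G$ such that every pair of adjacent vertices lies in exactly one clique of $\mathcal{C}$. A graph $G$ is integrable if there is an integral matrix $N$ with $A(G)-\lfloor\theta_{\min}(G)\rfloor I=N^TN$. *)

(* Defs.v *)
From mathcomp Require Import all_boot all_order all_algebra all_field.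
Set Implicit Arguments. Unset Strict Implicit. Unset Printing Implicit Defensive.
Import Order.TTheory GRing.Theory Num.Theory.
Local Open Scope ring_scope.

Definition simple_graph (n : nat) (e : rel 'I_n) : Prop :=
  (forall x y, e x y = e y x) /\ (forall x, ~~ e x x).

Definition adjmx (R : nzRingType) (n : nat) (e : rel 'I_n) : 'M[R]_n :=
  \matrix_(i, j) (e i j)%:R.

Definition srg (n : nat) (e : rel 'I_n) (v k lam mu : nat) : Prop :=
  [/\ simple_graph e, n = v,
      forall x, #|[set y | e x y]| = k,
      forall x y, e x y -> #|[set z | e x z && e y z]| = lam &
      forall x y, x != y -> ~~ e x y -> #|[set z | e x z && e y z]| = mu].

Definition is_srg (n : nat) (e : rel 'I_n) : Prop :=
  exists v k lam mu, srg e v k lam mu.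

(* theta is the smallest eigenvalue of A(G) (computed over algC;
   all eigenvalues of the symmetric real matrix A(G) are real). *)
Definition is_min_eigenvalue (n : nat) (e : rel 'I_n) (theta : algC) : Prop :=
  eigenvalue (adjmx algC e) theta /\
  forall a, eigenvalue (adjmx algC e) a -> theta <= a.

Definition is_clique (n : nat) (e : rel 'I_n) (C : {set 'I_n}) : Prop :=
  forall x y, x \in C -> y \in C -> x != y -> e x y.

Definition delsarte_clique (n : nat) (e : rel 'I_n) (k : nat) (theta : algC)
    (C : {set 'I_n}) : Prop :=
  is_clique e C /\ (#|C|%:R : algC) = 1 - k%:R / theta.

Definition geometric (n : nat) (e : rel 'I_n) : Prop :=
  exists k, (forall x, #|[set y | e x y]| = k) /\
  forall theta, is_min_eigenvalue e theta ->
  exists CC : {set {set 'I_n}},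
    (forall C, C \in CC -> delsarte_clique e k theta C) /\
    (forall x y, e x y -> #|[set C in CC | (x \in C) && (y \in C)]| = 1%N).

Definition integrable (n : nat) (e : rel 'I_n) : Prop :=
  forall theta, is_min_eigenvalue e theta ->
  exists (m : nat) (N : 'M[int]_(m, n)),
    adjmx int e - (Num.floor theta)%:M = N^T *m N.

(* Main.v *)
Require Import Defs.
From mathcomp Require Import all_boot all_order all_algebra all_field.
From mathcomp Require Import ring.
Import Order.TTheory GRing.Theory Num.Theory.
Local Open Scope ring_scope.
Lemma cardsum (T : finType) (A : {set T}) : #|A| = (\sum_(y : T) (y \in A : nat))%N.
Proof. by rewrite -sum1_card big_mkcond. Qed.

Lemma count_k (n : nat) (e : rel 'I_n) (CC : {set {set 'I_n}}) (x : 'I_n) :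
  (forall x y, e x y = e y x) -> (forall x, ~~ e x x) ->
  (forall C, C \in CC -> is_clique e C) ->
  (forall x y, e x y -> #|[set C in CC | (x \in C) && (y \in C)]| = 1%N) ->
  #|[set y | e x y]| = (\sum_(C in CC | x \in C) #|C :\ x|)%N.
Proof.
move=> esym eirr hcl hedge.
rewrite (eq_bigr (fun C => \sum_y (y \in C :\ x : nat))%N); last by move=> C _; exact: cardsum.
rewrite exchange_big /= cardsum; apply: eq_bigr => y _.
rewrite inE; case: (boolP (e x y)) => exy.
  change (1%N = \sum_(i in CC | x \in i) (y \in i :\ x : nat))%N; rewrite -(hedge _ _ exy).
  rewrite cardsum big_mkcond /= [RHS]big_mkcond /=; apply: eq_bigr => C _.
  rewrite !inE; have -> : y != x by apply/eqP => yx; move: exy; rewrite yx (negbTE (eirr x)).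
  by case: (C \in CC); case: (x \in C).
rewrite big1 // => C /andP [CC_C xC]; rewrite !inE.
case: (eqVneq y x) => //= yx; case yC: (y \in C) => //; move/negP: exy; case.
by apply: (hcl C CC_C) => //; rewrite eq_sym.
Qed.
Theorem lemma4p2 (n : nat) (e : rel 'I_n) :
  is_srg e -> geometric e -> integrable e.
Proof.
move=> [v [k0 [lam [mu [[esy eirr] _ _ _ _]]]]] [k [hk hgeo]] theta hth.
have [CC [hdel hedge]] := hgeo theta hth.
have [kz|kpos] := posnP k.
  have e0 : forall x y, e x y = false.
    move=> x y; apply/negbTE/negP => exy.
    have := hk x; rewrite kz => /eqP; rewrite cards_eq0 => /eqP/setP/(_ y).
    by rewrite !inE exy.
  have th0 : theta = 0.
    case/eigenvalueP: hth.1 => w.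
    have -> : adjmx algC e = 0 by apply/matrixP => i j; rewrite !mxE e0.
    rewrite mulmx0 => /esym/eqP; rewrite scaler_eq0 => /orP [/eqP //|w0 /negP[]//].
  exists 0%N, 0; apply/matrixP => i j; rewrite !mxE big_ord0 e0 th0 floor0.
  by rewrite mul0rn subr0.
pose cnt i j := #|[set C in CC | (i \in C) && (j \in C)]|.
have thc : forall x, theta = - (cnt x x)%:R.
  move=> x.
  have := @count_k n e CC x esy eirr (fun C h => (hdel C h).1) hedge.
  rewrite hk => /(congr1 (fun m : nat => m%:R : algC)).
  rewrite natr_sum.
  rewrite (eq_bigr (fun _ => - (k%:R / theta))); last first.
    move=> C /andP [CC_C xC]; have h := (hdel C CC_C).2.
    rewrite (cardsD1 x C) xC natrD in h; apply/(addrI (true:nat)%:R); rewrite h //.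
  rewrite sumr_const.
  have -> : #|(fun i : {set 'I_n} => (i \in CC) && (x \in i))| = cnt x x.
    by rewrite /cnt; apply: eq_card => C; rewrite !inE andbb.
  move=> h.
  have kn0 : k%:R != 0 :> algC by rewrite pnatr_eq0 -lt0n.
  have tn0 : theta != 0.
    apply: contra_neq kn0 => t0; rewrite h t0 invr0 mulr0 oppr0 mul0rn //.
  apply: (mulIf kn0); rewrite {1}h -mulr_natr; field.
  done.
have hc : forall i j, (cnt i j = \sum_(C in CC) ((i \in C) && (j \in C) : nat))%N.
  move=> i' j'; rewrite /cnt cardsum [RHS]big_mkcond; apply: eq_bigr => C _.
  by rewrite !inE; case: (C \in CC).
have fl : forall i, Num.floor theta = - (cnt i i : int).
  move=> i; have -> : theta = ((- (cnt i i : int))%:~R) by rewrite (thc i) mulrNz.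
  by rewrite intrKfloor.
exists #|CC|, (\matrix_(c < #|CC|, x < n) ((x \in enum_val c : nat)%:R : int)).
apply/matrixP => i j; rewrite !mxE.
under eq_bigr do rewrite !mxE -natrM mulnb.
rewrite -(big_enum_val (fun C : {set 'I_n} => (((i \in C) && (j \in C) : nat)%:R : int))) /= -natr_sum -hc.
case: (eqVneq i j) => [<-|ij].
  by rewrite (negbTE (eirr i)) (fl i) mulr1n sub0r opprK natz.
rewrite mulr0n subr0 natz.
case: (boolP (e i j)) => eij; first by rewrite /cnt (hedge _ _ eij).
suff -> : cnt i j = 0%N by [].
rewrite /cnt; apply/eqP; rewrite cards_eq0; apply/eqP/setP => C; rewrite !inE.
apply/negP => /and3P [CC_C iC jC]; move/negP: eij; apply.
exact: (hdel C CC_C).1.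
Qed.
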